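(* Under the hypotheses and notation of the context (PQRS-form with $m\ge1$ and $S$ invertible self-adjoint), the scattering matrix admits, for all sufficiently large $k>0$, the convergent expansion $$\mathcal S(k)=-I^{(n)}+2M_Q\left(I^{(a)}+RR^*+QQ^*\right)^{-1}M_Q^*+2X(X^*X)^{-1}X^*+2X\sum_{j=1}^\infty\left(\tfrac{1}{\mathrm ik}\right)^j\left[(X^*X)^{-1}S\right]^j(X^*X)^{-1}X^*,$$ and $$\lim_{k\to\infty}\mathcal S(k)=I^{(n)}-2M_P\left[I^{(b)}+P^*P+(RP-Q)^*(RP-Q)\right]^{-1}M_P^*.$$
   Context: $I^{(j)}$ denotes the $j\times j$ identity matrix. Let $0\le r_A,r_B\le n$ with $m=r_A+r_B-n\ge1$, $a=n-r_A$, $b=n-r_B$, $S\in\mathbb C^{m\times m}$ invertible self-adjoint, $P\in\mathbb C^{m\times b}$, $Q\in\mathbb C^{a\times b}$, $R\in\mathbb C^{a\times m}$. The vertex coupling is given by the PQRS-form $B_{PQRS}\Psi'=A_{PQRS}\Psi$ with (block sizes $m,a,b$) $$B_{PQRS}=\begin{pmatrix} I^{(m)} & 0 & P\\ R & I^{(a)} & Q\\ 0&0&0\end{pmatrix},\qquad A_{PQRS}=\begin{pmatrix} S & -SR^* & 0\\ 0&0&0\\ -P^* & (RP-Q)^* & I^{(b)}\end{pmatrix};$$ its scattering matrix is $\mathcal S(k)=-(A+\mathrm ikB)^{-1}(A-\mathrm ikB)$, $k>0$, with $A=-A_{PQRS}$, $B=B_{PQRS}$. Further, $$M_P=\begin{pmatrix}-P\\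 RP-Q\\ I^{(b)}\end{pmatrix},\quad M_Q=\begin{pmatrix}R^*\\ I^{(a)}\\ Q^*\end{pmatrix},\quad X=\begin{pmatrix}I^{(m)}\\0\\P^*\end{pmatrix}-M_Q\left(I^{(a)}+RR^*+QQ^*\right)^{-1}(R+QP^* ).$$ *)

(* Defs.v *)
From HB Require Import structures.
From mathcomp Require Import all_boot all_order all_algebra.
Set Implicit Arguments. Unset Strict Implicit. Unset Printing Implicit Defensive.
Import Order.TTheory GRing.Theory Num.Theory.
Local Open Scope ring_scope.

Definition adjmx (C : numClosedFieldType) (p q : nat) (A : 'M[C]_(p, q)) : 'M[C]_(q, p) :=
  (map_mx Num.conj A)^T.

Definition mx_cvg (C : numClosedFieldType) (p q : nat) (u : nat -> 'M[C]_(p, q))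
  (L : 'M[C]_(p, q)) : Prop :=
  forall eps : C, 0 < eps -> exists N : nat, forall N' : nat, (N <= N')%N ->
    forall i j, `|u N' i j - L i j| < eps.

Definition mx_lim_infty (C : numClosedFieldType) (p q : nat) (f : C -> 'M[C]_(p, q))
  (L : 'M[C]_(p, q)) : Prop :=
  forall eps : C, 0 < eps -> exists K : C, K \is Num.real /\
    forall k : C, k \is Num.real -> K < k -> forall i j, `|f k i j - L i j| < eps.

Section PQRS.
Variables (C : numClosedFieldType) (m a b : nat).
Variables (P : 'M[C]_(m, b)) (Q : 'M[C]_(a, b)) (R : 'M[C]_(a, m)) (S : 'M[C]_m).

(* n = m + a + b; block sizes m, a, b. *)
Definition B_PQRS : 'M[C]_(m + a + b) :=
  block_mx (block_mx 1%:M 0 R 1%:M) (col_mx P Q) 0 0.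

Definition A_PQRS : 'M[C]_(m + a + b) :=
  block_mx (block_mx S (- (S *m adjmx R)) 0 0) 0
           (row_mx (- adjmx P) (adjmx (R *m P - Q))) 1%:M.

(* Scattering matrix S(k) = -(A + i k B)^{-1} (A - i k B), A = -A_PQRS, B = B_PQRS. *)
Definition scat (k : C) : 'M[C]_(m + a + b) :=
  - (invmx (- A_PQRS + ('i * k) *: B_PQRS) *m (- A_PQRS - ('i * k) *: B_PQRS)).

Definition M_P : 'M[C]_(m + a + b, b) := col_mx (col_mx (- P) (R *m P - Q)) 1%:M.
Definition M_Q : 'M[C]_(m + a + b, a) := col_mx (col_mx (adjmx R) 1%:M) (adjmx Q).

Definition G_Q : 'M[C]_a := 1%:M + R *m adjmx R + Q *m adjmx Q.

Definition X_PQRS : 'M[C]_(m + a + b, m) :=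
  col_mx (col_mx 1%:M 0) (adjmx P) - M_Q *m invmx G_Q *m (R + Q *m adjmx P).

Definition Y_PQRS : 'M[C]_m := invmx (adjmx X_PQRS *m X_PQRS).

Definition scat_partial (k : C) (N : nat) : 'M[C]_(m + a + b) :=
  - 1%:M + 2%:R *: (M_Q *m invmx G_Q *m adjmx M_Q)
  + 2%:R *: (X_PQRS *m Y_PQRS *m adjmx X_PQRS)
  + 2%:R *: (X_PQRS *m (\sum_(1 <= j < N.+1)
                ((('i * k)^-1) ^+ j *: (Y_PQRS *m S) ^+ j))
             *m Y_PQRS *m adjmx X_PQRS).

Definition scat_limit : 'M[C]_(m + a + b) :=
  1%:M - 2%:R *: (M_P *m invmx (1%:M + adjmx P *m P + adjmx (R *m P - Q) *m (R *m P - Q))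
                      *m adjmx M_P).
End PQRS.

(* Main.v *)
Require Import Defs.
From HB Require Import structures.
From mathcomp Require Import all_boot all_order all_algebra.
Import Order.TTheory GRing.Theory Num.Theory.
Local Open Scope ring_scope.

Set Implicit Arguments. Unset Strict Implicit. Unset Printing Implicit Defensive.

Section Adj.
Variable C : numClosedFieldType.
Implicit Types (p q r : nat).

Lemma adjmxM p q r (A : 'M[C]_(p,q)) (B : 'M[C]_(q,r)) :
  adjmx (A *m B) = adjmx B *m adjmx A.
Proof. by rewrite /adjmx map_mxM trmx_mul. Qed.
Lemma adjmxK p q (A : 'M[C]_(p,q)) : adjmx (adjmx A) = A.
Proof. by apply/matrixP => i j; rewrite !mxE conjCK. Qed.
Lemma adjmxD p q (A B : 'M[C]_(p,q)) : adjmx (A + B) = adjmx A + adjmx B.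
Proof. by apply/matrixP => i j; rewrite !mxE rmorphD. Qed.
Lemma adjmxN p q (A : 'M[C]_(p,q)) : adjmx (- A) = - adjmx A.
Proof. by apply/matrixP => i j; rewrite !mxE rmorphN. Qed.
Lemma adjmxB p q (A B : 'M[C]_(p,q)) : adjmx (A - B) = adjmx A - adjmx B.
Proof. by rewrite adjmxD adjmxN. Qed.
Lemma adjmx0 p q : adjmx (0 : 'M[C]_(p,q)) = 0.
Proof. by apply/matrixP => i j; rewrite !mxE rmorph0. Qed.
Lemma adjmx1 p : adjmx (1%:M : 'M[C]_p) = 1%:M.
Proof. by rewrite /adjmx map_mx1 trmx1. Qed.
Lemma adjmxZ p q c (A : 'M[C]_(p,q)) : adjmx (c *: A) = c^* *: adjmx A.
Proof. by apply/matrixP => i j; rewrite !mxE rmorphM. Qed.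
Lemma adjmx_col p1 p2 q (A : 'M[C]_(p1,q)) (B : 'M[C]_(p2,q)) :
  adjmx (col_mx A B) = row_mx (adjmx A) (adjmx B).
Proof. by rewrite /adjmx map_col_mx tr_col_mx. Qed.
Lemma adjmx_row p q1 q2 (A : 'M[C]_(p,q1)) (B : 'M[C]_(p,q2)) :
  adjmx (row_mx A B) = col_mx (adjmx A) (adjmx B).
Proof. by rewrite /adjmx map_row_mx tr_row_mx. Qed.
End Adj.


Section Norm.
Variable C : numClosedFieldType.
Definition mnorm p q (A : 'M[C]_(p,q)) : C := \sum_i \sum_j `|A i j|.

Lemma sum_ge_term (I : finType) (F : I -> C) i0 :
  (forall i, 0 <= F i) -> F i0 <= \sum_i F i.
Proof.
move=> F0; rewrite (bigD1 i0) //= lerDl; exact: sumr_ge0.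
Qed.

Lemma mnorm_ge0 p q (A : 'M[C]_(p,q)) : 0 <= mnorm A.
Proof. by apply: sumr_ge0 => i _; apply: sumr_ge0. Qed.

Lemma mnorm_row p q (A : 'M[C]_(p,q)) i : \sum_j `|A i j| <= mnorm A.
Proof. by apply: (@sum_ge_term _ (fun i => \sum_j `|A i j|) i) => k; apply: sumr_ge0. Qed.

Lemma mnorm_entry p q (A : 'M[C]_(p,q)) i j : `|A i j| <= mnorm A.
Proof.
apply: le_trans (mnorm_row A i).
exact: (@sum_ge_term _ (fun j => `|A i j|) j).
Qed.

Lemma mnormD p q (A B : 'M[C]_(p,q)) : mnorm (A + B) <= mnorm A + mnorm B.
Proof.
rewrite /mnorm -big_split /=; apply: ler_sum => i _.
rewrite -big_split /=; apply: ler_sum => j _; rewrite mxE; exact: ler_normD.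
Qed.

Lemma mnormZ p q c (A : 'M[C]_(p,q)) : mnorm (c *: A) = `|c| * mnorm A.
Proof.
rewrite /mnorm mulr_sumr; apply: eq_bigr => i _; rewrite mulr_sumr.
by apply: eq_bigr => j _; rewrite mxE normrM.
Qed.

Lemma mnormN p q (A : 'M[C]_(p,q)) : mnorm (- A) = mnorm A.
Proof.
by rewrite /mnorm; apply: eq_bigr => i _; apply: eq_bigr => j _; rewrite mxE normrN.
Qed.

Lemma mnormM p q r (A : 'M[C]_(p,q)) (B : 'M[C]_(q,r)) :
  mnorm (A *m B) <= mnorm A * mnorm B.
Proof.
rewrite /mnorm mulr_suml.
apply: ler_sum => i _.
apply: (@le_trans _ _ (\sum_j \sum_k `|A i k| * `|B k j|)).
  apply: ler_sum => j _; rewrite mxE.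
  apply: le_trans (ler_norm_sum _ _ _) _.
  by apply: ler_sum => k _; rewrite normrM.
rewrite exchange_big /= mulr_suml; apply: ler_sum => k _.
rewrite -mulr_sumr; apply: ler_wpM2l => //; exact: mnorm_row.
Qed.

Lemma mnorm_eq0 p q (A : 'M[C]_(p,q)) : mnorm A = 0 -> A = 0.
Proof.
move=> h; apply/matrixP => i j; rewrite mxE; apply/eqP; rewrite -normr_eq0.
by rewrite eq_le normr_ge0 andbT -h mnorm_entry.
Qed.

Lemma mnormX p (T : 'M[C]_p) j : mnorm (T ^+ j.+1) <= mnorm T ^+ j.+1.
Proof.
elim: j => [|j IH]; first by rewrite !expr1.
rewrite exprS [_ ^+ j.+2]exprS -mulmxE.
apply: le_trans (mnormM _ _) _; apply: ler_wpM2l => //; exact: mnorm_ge0.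
Qed.
End Norm.


Section Pos.
Variable C : numClosedFieldType.

Lemma dotE p (v : 'rV[C]_p) : (v *m adjmx v) 0 0 = \sum_j `|v 0 j| ^+ 2.
Proof. by rewrite mxE; apply: eq_bigr => j _; rewrite !mxE normCK. Qed.

Lemma dot_ge0 p (v : 'rV[C]_p) : 0 <= (v *m adjmx v) 0 0.
Proof. by rewrite dotE; apply: sumr_ge0 => j _; apply: exprn_ge0. Qed.

Lemma dot_eq0 p (v : 'rV[C]_p) : (v *m adjmx v) 0 0 = 0 -> v = 0.
Proof.
rewrite dotE => /eqP; rewrite psumr_eq0 => [/allP h|j _]; last exact: exprn_ge0.
apply/matrixP => i j; rewrite ord1 mxE.
have := h j (mem_index_enum j); rewrite /= sqrf_eq0 normr_eq0.
by move/eqP.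
Qed.

Lemma unit_1DD p q (D : 'M[C]_(p,q)) : 1%:M + D *m adjmx D \in unitmx.
Proof.
rewrite -row_free_unit; apply: inj_row_free => v hv.
have : (v *m (1%:M + D *m adjmx D) *m adjmx v) 0 0 = 0 by rewrite hv mul0mx mxE.
rewrite mulmxDr mulmx1 mulmxDl mxE [X in _ + X](_ : _ = (v *m D *m adjmx (v *m D)) 0 0).
  move/eqP; rewrite paddr_eq0 ?dot_ge0 // => /andP[/eqP h _]; exact: dot_eq0.
by rewrite adjmxM !mulmxA.
Qed.

Lemma unit_AA p q (X : 'M[C]_(p,q)) (L : 'M[C]_(q,p)) :
  L *m X = 1%:M -> adjmx X *m X \in unitmx.
Proof.
move=> hL; rewrite -row_free_unit; apply: inj_row_free => v hv.
have h0 : v *m adjmx X = 0.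
  apply: dot_eq0; rewrite adjmxM adjmxK mulmxA -(mulmxA v) hv mul0mx mxE.
  by [].
have : adjmx (v *m adjmx X) = 0 by rewrite h0 adjmx0.
rewrite adjmxM adjmxK => h1.
by rewrite -(adjmxK v) -[adjmx v]mul1mx -hL -mulmxA h1 mulmx0 adjmx0.
Qed.
End Pos.


Section Blocks.
Variables (C : numClosedFieldType) (m a b : nat).
Variables (P : 'M[C]_(m, b)) (Q : 'M[C]_(a, b)) (R : 'M[C]_(a, m)) (S : 'M[C]_m).

Local Notation MQ := (M_Q Q R).
Local Notation MP := (M_P P Q R).
Local Notation GQ := (G_Q Q R).
Local Notation XX := (X_PQRS P Q R).
Local Notation A0 := (A_PQRS P Q R S).
Local Notation B0 := (B_PQRS P Q R).

Definition e1 : 'M[C]_(m + a + b, m) := col_mx (col_mx 1%:M 0) 0.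
Definition e2 : 'M[C]_(m + a + b, a) := col_mx (col_mx 0 1%:M) 0.
Definition e3 : 'M[C]_(m + a + b, b) := col_mx 0 1%:M.
Definition Fm : 'M[C]_(m + a + b, m) := col_mx (col_mx 1%:M 0) (adjmx P).
Definition Lm : 'M[C]_(m + a + b, m) := col_mx (col_mx 1%:M (- R)) 0.
Definition Vm : 'M[C]_(a, m) := R + Q *m adjmx P.
Definition Hm : 'M[C]_b := 1%:M + adjmx P *m P + adjmx (R *m P - Q) *m (R *m P - Q).

Lemma row_col0 p1 p2 q1 q2 (A : 'M[C]_(p1,q1)) (B : 'M[C]_(p2,q1)) :
  row_mx (col_mx A B) (0 : 'M_(p1+p2,q2)) = col_mx (row_mx A 0) (row_mx B 0).
Proof. by rewrite -col_mx0 -block_mxEh block_mxEv. Qed.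

Lemma adjMQ : adjmx MQ = row_mx (row_mx R 1%:M) Q.
Proof. by rewrite /M_Q !adjmx_col adjmx1 !adjmxK. Qed.
Lemma adjMP : adjmx MP = row_mx (row_mx (- adjmx P) (adjmx (R *m P - Q))) 1%:M.
Proof. by rewrite /M_P !adjmx_col adjmx1 adjmxN. Qed.
Lemma adjF : adjmx Fm = row_mx (row_mx 1%:M 0) P.
Proof. by rewrite /Fm !adjmx_col adjmx1 adjmx0 adjmxK. Qed.
Lemma adjL : adjmx Lm = row_mx (row_mx 1%:M (- adjmx R)) 0.
Proof. by rewrite /Lm !adjmx_col adjmx1 adjmx0 adjmxN. Qed.

Lemma B_dec : B0 = e1 *m adjmx Fm + e2 *m adjmx MQ.
Proof.
rewrite adjF adjMQ /e1 /e2 /B_PQRS !mul_col_mx !mul1mx !mul0mx add_col_mx add_col_mx.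
by rewrite !addr0 add0r block_mxEv row_mx0 block_mxEv -block_mxEh block_mxEv.
Qed.

Lemma A_dec : A0 = e1 *m (S *m adjmx Lm) + e3 *m adjmx MP.
Proof.
rewrite adjL adjMP /e1 /e3 /A_PQRS !mul_col_mx !mul1mx !mul0mx add_col_mx.
rewrite !mul_mx_row mulmx1 mulmx0 mulmxN add0r !addr0.
by rewrite block_mxEv block_mxEv row_mx0 row_col0 row_mx0.
Qed.

Lemma O1 : adjmx MQ *m MP = 0.
Proof.
rewrite adjMQ /M_P !mul_row_col mulmxN mul1mx mulmx1.
by rewrite addKr addNr.
Qed.
Lemma O2 : adjmx Fm *m MP = 0.
Proof.
by rewrite adjF /M_P !mul_row_col mul1mx mul0mx mulmx1 addr0 addNr.
Qed.
Lemma O3 : adjmx Lm *m MQ = 0.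
Proof.
by rewrite adjL /M_Q !mul_row_col mul1mx mulNmx mulmx1 mul0mx addr0 subrr.
Qed.
Lemma O4 : adjmx Lm *m Fm = 1%:M.
Proof.
by rewrite adjL /Fm !mul_row_col mul1mx mulmx0 mul0mx !addr0.
Qed.
Lemma O5 : adjmx MQ *m Fm = Vm.
Proof.
by rewrite adjMQ /Fm !mul_row_col mulmx1 mulmx0 addr0.
Qed.
Lemma O6 : adjmx MQ *m MQ = GQ.
Proof.
by rewrite adjMQ /M_Q !mul_row_col mul1mx /G_Q [R *m _ + _]addrC.
Qed.
Lemma O7 : adjmx MP *m MP = Hm.
Proof.
by rewrite adjMP /M_P !mul_row_col mulmx1 mulNmx mulmxN opprK /Hm addrC addrA.
Qed.

Lemma GQ_unit : GQ \in unitmx.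
Proof.
have -> : GQ = 1%:M + row_mx R Q *m adjmx (row_mx R Q).
  by rewrite adjmx_row mul_row_col /G_Q addrA.
exact: unit_1DD.
Qed.
Lemma Hm_unit : Hm \in unitmx.
Proof.
set D := row_mx (adjmx P) (adjmx (R *m P - Q)).
have -> : Hm = 1%:M + D *m adjmx D.
  by rewrite /D adjmx_row mul_row_col !adjmxK /Hm addrA.
exact: unit_1DD.
Qed.

Lemma Xdef : XX = Fm - MQ *m invmx GQ *m Vm.
Proof. by []. Qed.

Lemma L1 : adjmx MQ *m XX = 0.
Proof.
by rewrite Xdef mulmxBr O5 !mulmxA O6 mulmxV ?GQ_unit // mul1mx subrr.
Qed.
Lemma L2 : adjmx Lm *m XX = 1%:M.
Proof.
by rewrite Xdef mulmxBr O4 !mulmxA O3 !mul0mx subr0.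
Qed.
Lemma L1' : adjmx XX *m MQ = 0.
Proof. by rewrite -[MQ]adjmxK -adjmxM L1 adjmx0. Qed.
Lemma L3 : adjmx XX *m MP = 0.
Proof.
by rewrite Xdef adjmxB mulmxBl O2 !adjmxM -!mulmxA O1 !mulmx0 subrr.
Qed.
Lemma L3' : adjmx MP *m XX = 0.
Proof. by rewrite -[XX]adjmxK -adjmxM L3 adjmx0. Qed.
Lemma L4 : adjmx Fm *m XX = adjmx XX *m XX.
Proof.
have -> : Fm = XX + MQ *m invmx GQ *m Vm by rewrite Xdef subrK.
by rewrite adjmxD mulmxDl !adjmxM -!mulmxA L1 !mulmx0 addr0.
Qed.
Lemma L5 : B0 *m XX = e1 *m (adjmx XX *m XX).
Proof. by rewrite B_dec mulmxDl -!mulmxA L4 L1 mulmx0 addr0. Qed.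
Lemma L6 : A0 *m XX = e1 *m S.
Proof. by rewrite A_dec mulmxDl -!mulmxA L2 L3' mulmx1 mulmx0 addr0. Qed.
Lemma O1' : adjmx MP *m MQ = 0.
Proof. by rewrite -[MQ]adjmxK -adjmxM O1 adjmx0. Qed.
Lemma L7 : A0 *m MQ = 0.
Proof. by rewrite A_dec mulmxDl -!mulmxA O3 O1' !mulmx0 addr0. Qed.
Lemma L8 : B0 *m MP = 0.
Proof. by rewrite B_dec mulmxDl -!mulmxA O2 O1 !mulmx0 addr0. Qed.
Lemma L9 : B0 *m MQ = e1 *m (adjmx Fm *m MQ) + e2 *m GQ.
Proof. by rewrite B_dec mulmxDl -!mulmxA O6. Qed.
Lemma L10 : A0 *m MP = e1 *m (S *m (adjmx Lm *m MP)) + e3 *m Hm.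
Proof. by rewrite A_dec mulmxDl -!mulmxA O7. Qed.
End Blocks.


Section Main.
Variables (C : numClosedFieldType) (m a b : nat).
Variables (P : 'M[C]_(m, b)) (Q : 'M[C]_(a, b)) (R : 'M[C]_(a, m)) (S : 'M[C]_m).
Local Notation MQ := (M_Q Q R).
Local Notation MP := (M_P P Q R).
Local Notation GQ := (G_Q Q R).
Local Notation XX := (X_PQRS P Q R).
Local Notation YY := (Y_PQRS P Q R).
Local Notation A0 := (A_PQRS P Q R S).
Local Notation B0 := (B_PQRS P Q R).
Local Notation Hm := (Hm P Q R).
Local Notation E1 := (@e1 C m a b).
Local Notation E2 := (@e2 C m a b).
Local Notation E3 := (@e3 C m a b).

Definition Um : 'M[C]_(m + a + b) := row_mx (row_mx XX MQ) MP.

Lemma XX_unit : adjmx XX *m XX \in unitmx.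
Proof. exact: (unit_AA (L2 P Q R)). Qed.

Lemma gram : adjmx Um *m Um = block_mx (block_mx (adjmx XX *m XX) 0 0 GQ) 0 0 Hm.
Proof.
rewrite /Um !adjmx_row !mul_col_mx !mul_mx_row.
rewrite L1 L1' L3 L3' O1 O1' O6 O7.
by rewrite (block_mxEv (block_mx _ _ _ _)) !block_mxEv row_col0 row_mx0.
Qed.

Lemma Um_unit : Um \in unitmx.
Proof.
have : adjmx Um *m Um \in unitmx.
  rewrite gram unitmxE !det_ublock.
  by rewrite !unitrM -!unitmxE XX_unit GQ_unit Hm_unit.
by rewrite unitmx_mul => /andP[].
Qed.

Definition PiQ := MQ *m invmx GQ *m adjmx MQ.
Definition PiX := XX *m YY *m adjmx XX.
Definition PiP := MP *m invmx Hm *m adjmx MP.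

Lemma proj_sum : PiQ + PiX + PiP = 1%:M.
Proof.
have h : (PiQ + PiX + PiP) *m Um = Um.
  rewrite /Um !mul_mx_row !(mulmxDl (PiQ + PiX)) !(mulmxDl PiQ) /PiQ /PiX /PiP -!mulmxA.
  rewrite L1 L1' L3 L3' O1 O1' O6 O7 !mulmx0 !addr0 !add0r.
  rewrite /Y_PQRS !mulVmx ?GQ_unit ?Hm_unit ?XX_unit //.
  by rewrite !mulmx1.
rewrite -[LHS](mulmxK Um_unit) h mulmxV //; exact: Um_unit.
Qed.

Lemma limit_form : scat_limit P Q R = - 1%:M + 2%:R *: PiQ + 2%:R *: PiX.
Proof.
have hP : PiP = 1%:M - (PiQ + PiX) by rewrite -proj_sum [X in X - _]addrC addrK.
have -> : scat_limit P Q R = 1%:M - 2%:R *: PiP by [].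
have h2 : 2%:R *: (1%:M : 'M[C]_(m+a+b)) = 1%:M + 1%:M by rewrite scaler_nat mulr2n.
rewrite hP scalerBr opprB h2 scalerDr addrCA opprD addNKr -[RHS]addrA addrC.
by [].
Qed.
End Main.

Section Scat.
Variables (C : numClosedFieldType) (m a b : nat).
Variables (P : 'M[C]_(m, b)) (Q : 'M[C]_(a, b)) (R : 'M[C]_(a, m)) (S : 'M[C]_m).
Local Notation MQ := (M_Q Q R).
Local Notation MP := (M_P P Q R).
Local Notation GQ := (G_Q Q R).
Local Notation XX := (X_PQRS P Q R).
Local Notation YY := (Y_PQRS P Q R).
Local Notation A0 := (A_PQRS P Q R S).
Local Notation B0 := (B_PQRS P Q R).
Local Notation Hm := (Hm P Q R).
Local Notation E1 := (@e1 C m a b).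
Local Notation Umn := (Um P Q R).
Local Notation PiQn := (PiQ Q R).
Local Notation XXX := (adjmx XX *m XX).

Variables (z : C).
Hypothesis z0 : z != 0.
Definition Tm := z^-1 *: (YY *m S).
Hypothesis hT : 1%:M - Tm \in unitmx.
Definition Vz := invmx (1%:M - Tm).
Definition Ek : 'M[C]_(m + a + b) :=
  - 1%:M + 2%:R *: PiQn + 2%:R *: (XX *m (Vz *m YY) *m adjmx XX).
Definition Dk := z *: XXX - S.
Let Mz := - A0 + z *: B0.
Let Nz := - A0 - z *: B0.

Lemma Dk_eq : Dk = z *: XXX *m (1%:M - Tm).
Proof.
rewrite /Dk /Tm (mulmxBr (z *: XXX)) mulmx1 -scalemxAr -scalemxAl scalerA mulVf // scale1r.
by rewrite mulmxA /Y_PQRS mulmxV ?XX_unit // mul1mx.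
Qed.

Lemma DkV : Dk *m Vz = z *: XXX.
Proof. by rewrite Dk_eq -mulmxA /Vz mulmxV // mulmx1. Qed.

Lemma Dk_unit : Dk \in unitmx.
Proof.
by rewrite Dk_eq unitmx_mul hT andbT unitmxZ ?unitfE // XX_unit.
Qed.

Lemma EX : Ek *m XX = - XX + 2%:R *: (XX *m Vz).
Proof.
rewrite /Ek !(mulmxDl _ _ XX) mulNmx mul1mx -!scalemxAl /PiQ -!mulmxA L1 !mulmx0 scaler0 addr0.
by rewrite /Y_PQRS mulVmx ?XX_unit // mulmx1.
Qed.

Lemma two_sub p q (x : 'M[C]_(p,q)) : - x + 2%:R *: x = x.
Proof. by rewrite scaler_nat mulr2n addKr. Qed.

Lemma EQc : Ek *m MQ = MQ.
Proof.
rewrite /Ek !(mulmxDl _ _ MQ) mulNmx mul1mx -!scalemxAl /PiQ -!mulmxA L1' !mulmx0 scaler0 addr0.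
by rewrite O6 mulVmx ?GQ_unit // mulmx1 two_sub.
Qed.

Lemma EPc : Ek *m MP = - MP.
Proof.
rewrite /Ek !(mulmxDl _ _ MP) mulNmx mul1mx -!scalemxAl /PiQ -!mulmxA L3 O1 !mulmx0 !scaler0.
by rewrite !addr0.
Qed.

Lemma MX : Mz *m XX = E1 *m Dk.
Proof.
rewrite /Mz (mulmxDl (- A0)) mulNmx L6 -scalemxAl L5 /Dk (mulmxBr E1) scalemxAr.
by rewrite addrC.
Qed.

Lemma NX : Nz *m XX = - (E1 *m (z *: XXX + S)).
Proof.
rewrite /Nz (mulmxBl (- A0)) mulNmx L6 -scalemxAl L5 (mulmxDr E1) scalemxAr.
by rewrite opprD addrC.
Qed.

Lemma MQc : Mz *m MQ = z *: (B0 *m MQ).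
Proof. by rewrite /Mz mulmxDl mulNmx L7 oppr0 add0r -scalemxAl. Qed.
Lemma NQc : Nz *m MQ = - (z *: (B0 *m MQ)).
Proof. by rewrite /Nz mulmxBl mulNmx L7 oppr0 add0r -scalemxAl. Qed.
Lemma MPc : Mz *m MP = - (A0 *m MP).
Proof. by rewrite /Mz mulmxDl mulNmx -scalemxAl L8 scaler0 addr0. Qed.
Lemma NPc : Nz *m MP = - (A0 *m MP).
Proof. by rewrite /Nz mulmxBl mulNmx -scalemxAl L8 scaler0 subr0. Qed.

Lemma key : Mz *m Ek = - Nz.
Proof.
have h : Mz *m Ek *m Umn = - Nz *m Umn.
  rewrite -mulmxA /Um !mul_mx_row.
  rewrite EX EQc EPc !mulNmx.
  rewrite mulmxN MPc NPc MQc NQc !opprK; congr row_mx; congr row_mx.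
  rewrite (mulmxDr Mz) mulmxN -scalemxAr mulmxA MX -mulmxA DkV NX opprK.
  rewrite scalemxAr -mulmxN -(mulmxDr E1); congr (_ *m _).
  by rewrite opprB scaler_nat mulr2n addrA subrK addrC.
by rewrite -[LHS](mulmxK (Um_unit P Q R)) h mulmxK // Um_unit.
Qed.

Lemma col_row0 p1 q1 q2 r (A : 'M[C]_(p1,q1)) (B : 'M[C]_(p1,q2)) :
  col_mx (row_mx A B) (0 : 'M_(r,q1+q2)) = row_mx (col_mx A 0) (col_mx B 0).
Proof. by rewrite -row_mx0 -block_mxEv block_mxEh. Qed.

Lemma MU : Mz *m Umn = block_mx (block_mx Dk (z *: (adjmx (@Fm C m a b P) *m MQ)) 0 (z *: GQ))
   (col_mx (- (S *m (adjmx (@Lm C m a b R) *m MP))) 0) 0 (- Hm).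
Proof.
rewrite /Um !mul_mx_row MX MQc MPc L9 L10 /e1 /e2 /e3.
rewrite !mul_col_mx !mul1mx !mul0mx !add_col_mx !addr0 !add0r.
rewrite !scale_col_mx !scaler0 !opp_col_mx !oppr0.
by rewrite block_mxEh [block_mx Dk _ _ _]block_mxEh col_row0.
Qed.

Lemma M_unit : Mz \in unitmx.
Proof.
have : Mz *m Umn \in unitmx.
  rewrite MU unitmxE !det_ublock.
  rewrite !unitrM -!unitmxE Dk_unit unitmxZ ?unitfE // GQ_unit /=.
  by rewrite -scaleN1r unitmxZ ?unitrN1 // Hm_unit.
by rewrite unitmx_mul => /andP[].
Qed.

Lemma scat_form (k : C) : z = 'i * k -> scat P Q R S k = Ek.
Proof.
move=> zk; rewrite /scat -zk -/Mz -/Nz -[Nz]opprK -key mulmxN opprK mulKmx //.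
exact: M_unit.
Qed.
End Scat.


Section Gen.
Variables (C : numClosedFieldType) (m : nat).
Implicit Types T : 'M[C]_m.

Lemma unit_1T T : mnorm T < 1 -> 1%:M - T \in unitmx.
Proof.
move=> hT; rewrite -row_free_unit; apply: inj_row_free => v hv.
have hv' : v = v *m T by apply/eqP; rewrite -subr_eq0 -{1}[v]mulmx1 -mulmxBr hv.
apply: mnorm_eq0; apply/eqP.
have h := mnormM v T; rewrite -hv' in h.
have n0 := mnorm_ge0 v.
apply: contraT => nz.
have vp : 0 < mnorm v by rewrite lt0r nz n0.
have : mnorm v * mnorm T < mnorm v by rewrite gtr_pMr.
by rewrite lt_leAnge h /= andbF.
Qed.

Lemma boundV T : mnorm T <= 2^-1 ->
  mnorm (invmx (1%:M - T)) <= 2%:R * mnorm (1%:M : 'M[C]_m).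
Proof.
move=> hT.
have u : 1%:M - T \in unitmx.
  apply: unit_1T; apply: le_lt_trans hT _; rewrite invf_lt1 ?ltr1n //.
set V := invmx (1%:M - T).
have hV : V = 1%:M + T *m V.
  by apply/eqP; rewrite -subr_eq eq_sym -{1}[V]mul1mx -mulmxBl /V mulmxV.
have h : mnorm V <= mnorm (1%:M : 'M[C]_m) + 2^-1 * mnorm V.
  rewrite {1}hV; apply: le_trans (mnormD _ _) _; rewrite lerD2l.
  apply: le_trans (mnormM _ _) _; apply: ler_wpM2r => //; exact: mnorm_ge0.
have : mnorm V - 2^-1 * mnorm V <= mnorm (1%:M : 'M[C]_m) by rewrite lerBlDr.
rewrite -{1}[mnorm V]mul1r -mulrBl.
have -> : (1 - 2^-1 : C) = 2^-1.
  by rewrite {1}(splitr 1) mul1r addrK.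
by rewrite -ler_pdivlMl ?invr_gt0 ?ltr0n // invrK.
Qed.

Lemma geom T N : (1%:M + \sum_(1 <= j < N.+1) T ^+ j) *m (1%:M - T) = 1%:M - T ^+ N.+1.
Proof.
elim: N => [|N IH].
  by rewrite big_geq // addr0 mul1mx expr1.
rewrite big_nat_recr //= addrA mulmxDl IH mulmxBr mulmx1 mulmxE -exprSr.
by rewrite addrA subrK.
Qed.

Lemma sumZ (x : C) T N : \sum_(1 <= j < N.+1) (x ^+ j *: T ^+ j) = \sum_(1 <= j < N.+1) (x *: T) ^+ j.
Proof.
apply: eq_bigr => j _; elim: j => [|j IH]; first by rewrite !expr0 scale1r.
by rewrite !exprS -IH -!mulmxE -scalemxAl -scalemxAr scalerA.
Qed.
End Gen.


Section Anal.
Variables (C : numClosedFieldType) (m a b : nat).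
Variables (P : 'M[C]_(m, b)) (Q : 'M[C]_(a, b)) (R : 'M[C]_(a, m)) (S : 'M[C]_m).
Local Notation XX := (X_PQRS P Q R).
Local Notation YY := (Y_PQRS P Q R).

Definition cY := mnorm (YY *m S).
Definition n1 := mnorm (1%:M : 'M[C]_m).
Definition K0 := 2%:R * mnorm XX * (2%:R * n1) * mnorm YY * mnorm (adjmx XX).

Lemma cY_ge0 : 0 <= cY. Proof. exact: mnorm_ge0. Qed.
Lemma K0_ge0 : 0 <= K0.
Proof.
rewrite /K0 !mulr_ge0 ?mnorm_ge0 ?ler0n //.
Qed.

Lemma normTk k : 0 < k -> mnorm (Tm P Q R S ('i * k)) = cY / k.
Proof.
move=> k0; rewrite /Tm mnormZ normfV normrM normCi mul1r gtr0_norm // mulrC.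
by [].

Qed.

Lemma Tk_small k : 0 < k -> 2%:R * cY < k -> mnorm (Tm P Q R S ('i * k)) <= 2^-1.
Proof.
move=> k0 hk; rewrite normTk // ler_pdivrMr // ler_pdivlMl ?ltr0n //.
exact: ltW.
Qed.

Lemma bound5 p q r (X : 'M[C]_(p,q)) (A V Y : 'M[C]_q) (X' : 'M[C]_(q,r)) tA tV :
  mnorm A <= tA -> mnorm V <= tV ->
  mnorm (2%:R *: (X *m (A *m V *m Y) *m X')) <=
    2%:R * mnorm X * tA * tV * mnorm Y * mnorm X'.
Proof.
move=> hA hV.
have gA : 0 <= tA := le_trans (mnorm_ge0 _) hA.
have gV : 0 <= tV := le_trans (mnorm_ge0 _) hV.
set M := A *m V *m Y.
have h1 : mnorm (X *m M *m X') <= mnorm X * mnorm M * mnorm X'.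
  apply: le_trans (mnormM _ _) _; apply: (ler_wpM2r (mnorm_ge0 _)); exact: mnormM.
have h2 : mnorm M <= tA * tV * mnorm Y.
  apply: le_trans (mnormM _ _) _; apply: (ler_wpM2r (mnorm_ge0 _)).
  apply: le_trans (mnormM _ _) _; exact: ler_pM (mnorm_ge0 _) (mnorm_ge0 _) hA hV.
have -> : 2%:R * mnorm X * tA * tV * mnorm Y * mnorm X' =
          2%:R * (mnorm X * (tA * tV * mnorm Y) * mnorm X') by rewrite !mulrA.
rewrite mnormZ normr_nat ler_wpM2l ?ler0n //; apply: le_trans h1 _.
apply: (ler_wpM2r (mnorm_ge0 _)); apply: (ler_wpM2l (mnorm_ge0 _)); exact: h2.
Qed.

Lemma partial_eq k N : 'i * k != 0 -> 1%:M - Tm P Q R S ('i * k) \in unitmx ->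
  scat_partial P Q R S k N = Ek P Q R S ('i * k) -
    2%:R *: (XX *m ((Tm P Q R S ('i * k)) ^+ N.+1 *m Vz P Q R S ('i * k) *m YY) *m adjmx XX).
Proof.
move=> z0 hT.
set T := Tm P Q R S ('i * k); set V := Vz P Q R S ('i * k).
have hs : 1%:M + \sum_(1 <= j < N.+1) T ^+ j = (1%:M - T ^+ N.+1) *m V.
  by rewrite -geom /V /Vz -/T mulmxK.
rewrite /scat_partial sumZ.
rewrite /Ek -!addrA; congr (_ + (_ + _)).
rewrite -/T -/V -scalerDr -scalerBr; congr (_ *: _).
rewrite -(mulmxDl _ _ (adjmx XX)) -(mulmxBl _ _ (adjmx XX)); congr (_ *m _).
rewrite -(mulmxA XX _ YY) -(mulmxDr XX) -(mulmxBr XX); congr (_ *m _).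
by rewrite -{1}[YY]mul1mx -mulmxDl hs mulmxBl mul1mx mulmxBl.
Qed.

Lemma limit_eq k : 'i * k != 0 -> 1%:M - Tm P Q R S ('i * k) \in unitmx ->
  scat P Q R S k - scat_limit P Q R =
    2%:R *: (XX *m (Tm P Q R S ('i * k) *m Vz P Q R S ('i * k) *m YY) *m adjmx XX).
Proof.
move=> z0 hT; rewrite (scat_form z0 hT (erefl _)) limit_form.
set T := Tm P Q R S ('i * k); set V := Vz P Q R S ('i * k).
have hV : V = 1%:M + T *m V.
  by apply/eqP; rewrite -subr_eq eq_sym -{1}[V]mul1mx -mulmxBl /V /Vz -/T mulmxV.
rewrite /Ek -/T -/V (addrC (- 1%:M + _)) opprD addrA addrK /PiX -scalerBr; congr (_ *: _).
rewrite -(mulmxBl _ _ (adjmx XX)).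
rewrite -(mulmxBr XX); congr (_ *m _ *m _).
by rewrite -{2}[YY]mul1mx -mulmxBl {1}hV (addrC 1%:M) addrK.
Qed.
End Anal.


Section Fin.
Variables (C : archiClosedFieldType) (m a b : nat).
Variables (P : 'M[C]_(m, b)) (Q : 'M[C]_(a, b)) (R : 'M[C]_(a, m)) (S : 'M[C]_m).
Local Notation XX := (X_PQRS P Q R).
Local Notation YY := (Y_PQRS P Q R).

Lemma K0_assoc t : 2%:R * mnorm XX * t * (2%:R * n1 C m) * mnorm YY * mnorm (adjmx XX)
  = K0 P Q R * t.
Proof. by rewrite /K0 -!mulrA; congr (_ * (_ * _)); rewrite mulrC -!mulrA. Qed.

Lemma geo_small (K e : C) n : 0 <= K -> 0 < e -> K / e < n%:R -> K * (2^-1) ^+ n < e.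
Proof.
move=> K0 e0 hn.
have p2 : 0 < (2%:R : C) ^+ n by rewrite exprn_gt0 ?ltr0n.
rewrite exprVn ltr_pdivrMr //.
rewrite ltr_pdivrMr // in hn.
apply: lt_le_trans hn _; rewrite mulrC ler_wpM2l ?(ltW e0) //.
by rewrite -natrX ler_nat ltnW // ltn_expl.
Qed.

Lemma setup k : k \is Num.real -> 0 < k -> 2%:R * cY P Q R S < k ->
  [/\ 'i * k != 0, 1%:M - Tm P Q R S ('i * k) \in unitmx,
      mnorm (Tm P Q R S ('i * k)) <= 2^-1 &
      mnorm (Vz P Q R S ('i * k)) <= 2%:R * n1 C m].
Proof.
move=> kr k0 hk.
have hT := Tk_small k0 hk.
have u : 1%:M - Tm P Q R S ('i * k) \in unitmx.
  apply: unit_1T; apply: le_lt_trans hT _; rewrite invf_lt1 ?ltr1n //.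
split => //; last exact: boundV.
by rewrite mulf_neq0 ?neq0Ci // gt_eqF.
Qed.
End Fin.

Unset Implicit Arguments. Set Strict Implicit. Set Printing Implicit Defensive.

Lemma entry_sub (C : numClosedFieldType) p q (A B : 'M[C]_(p,q)) i j :
  A i j - B i j = (A - B) i j.
Proof. by rewrite !mxE. Qed.

Theorem mainTheorem4 (C : archiClosedFieldType) (m a b : nat)
  (P : 'M[C]_(m, b)) (Q : 'M[C]_(a, b)) (R : 'M[C]_(a, m)) (S : 'M[C]_m) :
  (0 < m)%N ->
  S \in unitmx ->
  adjmx S = S ->
  (exists K : C, K \is Num.real /\
     forall k : C, k \is Num.real -> 0 < k -> K < k ->
       mx_cvg (scat_partial P Q R S k) (scat P Q R S k))
  /\ mx_lim_infty (scat P Q R S) (scat_limit P Q R).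
Proof.
move=> _ _ _.
have cY0 := cY_ge0 P Q R S.
have K00 := K0_ge0 P Q R.
split.
  exists (2%:R * cY P Q R S); split; first by apply: ger0_real; rewrite mulr_ge0 ?ler0n.
  move=> k kr k0 hk eps e0.
  have [z0 u hT hV] := setup kr k0 hk.
  exists (Num.bound (K0 P Q R / eps)) => N hN i j.
  rewrite entry_sub partial_eq // (scat_form z0 u (erefl _)) addrAC subrr add0r mxE normrN.
  apply: le_lt_trans (mnorm_entry _ i j) _.
  apply: le_lt_trans (bound5 _ _ _ (mnormX _ _) hV) _.
  rewrite K0_assoc.
  apply: le_lt_trans (geo_small (n := N.+1) K00 e0 _).
    apply: ler_wpM2l => //; apply: lerXn2r; rewrite ?nnegrE ?mnorm_ge0 ?invr_ge0 ?ler0n //.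
  apply: lt_le_trans (archi_boundP _) _; first by rewrite divr_ge0 ?(ltW e0).
  by rewrite ler_nat (leq_trans hN).
move=> eps e0.
set K := 2%:R * cY P Q R S + K0 P Q R * cY P Q R S / eps + 1.
have Kr : K \is Num.real.
  apply: ger0_real; rewrite /K !addr_ge0 ?ler01 ?mulr_ge0 ?invr_ge0 ?ler0n ?(ltW e0) ?mnorm_ge0 //.
exists K; split => // k kr hk i j.
have h1 : 2%:R * cY P Q R S < k.
  apply: le_lt_trans hk; rewrite /K -addrA lerDl addr_ge0 //.
  rewrite !mulr_ge0 ?invr_ge0 ?(ltW e0) ?mnorm_ge0 //.
have k0 : 0 < k by apply: le_lt_trans h1; rewrite mulr_ge0 ?ler0n.
have [z0 u hT hV] := setup kr k0 h1.
rewrite entry_sub limit_eq //.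
apply: le_lt_trans (mnorm_entry _ i j) _.
apply: le_lt_trans (bound5 _ _ _ (le_refl _) hV) _.
rewrite K0_assoc normTk // mulrA ltr_pdivrMr // -ltr_pdivrMl //.
apply: le_lt_trans hk; rewrite /K mulrC addrAC lerDr addr_ge0 ?ler01 //.
by rewrite mulr_ge0 ?ler0n.
Qed.
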